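(* Let $k\ge1$, $D_k=3k^2+3k+1$, and let $c\in P_k$. Then the set $c+V(T_{D_k})=\{c+a\alpha_1+b\alpha_2 : 0\le b\le a\le D_k\}$ contains exactly $\dfrac{D_k+5}{2}$ points of $P_k$.
   Context: Let $\alpha_1=(1,0)$ and $\alpha_2=(-\tfrac12,\tfrac{\sqrt3}{2})$. The triangular lattice $T_\infty$ is the infinite graph with vertex set $\{a\alpha_1+b\alpha_2 : a,b\in\mathbb Z\}$, two vertices being adjacent iff their Euclidean distance is $1$. For $d\ge0$, $T_d$ is the subgraph of $T_\infty$ induced by the vertices $a\alpha_1+b\alpha_2$ with $0\le b\le a\le d$. For $k\ge 1$, let $D_k=3k^2+3k+1$ and let $P_k$ (the pattern $P_{k+1,1}$) be the sublattice $\{x\,u+y\,v : x,y\in\mathbb Z\}$ of the vertex set of $T_\infty$, where $u=(2k+1)\alpha_1+k\alpha_2$ and $v=(k+1)\alpha_1+(2k+1)\alpha_2$ ($v$ is $u$ rotated by $60^\circ$). Consecutive points of $P_k$ along any of the three lattice directions are at distance $D_k$; in particular if $c\in P_k$ then the three corners $c$, $c+D_k\alpha_1$, $c+D_k(\alpha_1+\alpha_2)$ of $c+V(T_{D_k})$ lie in $P_k$. *)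

(* Defs.v *)
(* A vertex a*alpha1 + b*alpha2 of the triangular lattice is
   represented by its integer coordinate pair (a, b) : int * int
   (alpha1, alpha2 are linearly independent, so this is a bijection). *)
From HB Require Import structures.
From mathcomp Require Import all_boot all_order all_algebra.
Set Implicit Arguments. Unset Strict Implicit. Unset Printing Implicit Defensive.
Import Order.TTheory GRing.Theory Num.Theory.
Local Open Scope ring_scope.

Definition Dk (k : nat) : nat := (3 * k ^ 2 + 3 * k + 1)%N.

Definition u_k (k : nat) : int * int := ((2 * k + 1)%:Z, k%:Z).
Definition v_k (k : nat) : int * int := ((k + 1)%:Z, (2 * k + 1)%:Z).

Definition inPk (k : nat) (p : int * int) : Prop :=
  exists x y : int,
    p = (x * (u_k k).1 + y * (v_k k).1, x * (u_k k).2 + y * (v_k k).2).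

Definition inT (d : nat) (a b : int) : Prop := 0 <= b /\ b <= a /\ a <= d%:Z.

Definition shift (c : int * int) (a b : int) : int * int := (c.1 + a, c.2 + b).

(* Main.v *)
Require Import Defs.
From mathcomp Require Import all_boot all_order all_algebra.
Import Order.TTheory GRing.Theory Num.Theory.
Local Open Scope ring_scope.
From mathcomp Require Import zify ring lra.
Local Close Scope ring_scope.

Section S.
Variable k : nat.
Local Notation D := (Dk k).
Definition K1 := (2 * k + 1)%N.
Definition K2 := (Dk k - k.+1)%N.
Definition G (a b : nat) : bool := (D %| K1 * a + K2 * b)%N.

Lemma cop_of x y : (D %| x * y + 1)%N -> coprime x D.
Proof.
move=> H; rewrite /coprime.
have h1 : (gcdn x D %| x * y)%N by apply: dvdn_mulr; apply: dvdn_gcdl.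
have h2 : (gcdn x D %| x * y + 1)%N by apply: dvdn_trans H; apply: dvdn_gcdr.
by rewrite (dvdn_addr 1 h1) dvdn1 in h2.
Qed.

Lemma D_ge : (k.+1 <= D)%N. Proof. rewrite /Dk; lia. Qed.

Lemma copK1 : coprime K1 D.
Proof. apply: (@cop_of _ (3 * K1)); apply/dvdnP; exists 4; rewrite /K1 /Dk; lia. Qed.
Lemma copK2 : coprime K2 D.
Proof. apply: (@cop_of _ (D - 3 * k)); apply/dvdnP; exists (D - 4 * k)%N.
rewrite /K2 /Dk; nia. Qed.
Lemma copk : coprime k D.
Proof. apply: (@cop_of _ (3 * k.+1)); apply/dvdnP; exists 1; rewrite /Dk; lia. Qed.
Lemma dvd_compl x y n : (x + y = n * D)%N -> (D %| x) = (D %| y).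
Proof. move=> h; apply/idP/idP => H.
- by rewrite -(dvdn_addr y H) h dvdn_mull.
- by rewrite -(dvdn_addl x H) h dvdn_mull.
Qed.

Lemma G_rev a b : (a <= D)%N -> (b <= D)%N -> G (D - a) (D - b) = G a b.
Proof.
move=> ha hb; rewrite /G; apply: (@dvd_compl _ _ (K1 + K2)%N).
have := D_ge; rewrite /K1 /K2 => hD; nia.
Qed.

Lemma dvd_small x : (x <= D)%N -> (D %| x) = (x == 0%N) || (x == D).
Proof.
move=> hx; apply/idP/idP.
- move/dvdnP=> [q hq]; have : (q <= 1)%N.
    have : (0 < D)%N by rewrite /Dk; lia.
    nia.
  case: q hq => [|[|q]] hq hq1; [by rewrite hq mul0n | by rewrite hq mul1n eqxx orbT | by []].
- by case/orP=> /eqP ->; rewrite ?dvd0n ?dvdnn.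
Qed.

Lemma G_diag a : (a <= D)%N -> G a a = (a == 0%N) || (a == D).
Proof.
move=> ha; rewrite /G -mulnDl.
have -> : (K1 + K2 = k + 1 * D)%N by rewrite /K1 /K2; have := D_ge; lia.
rewrite mulnDl mul1n (dvdn_addl (k * a) (dvdn_mulr a (dvdnn D))) Gauss_dvdr; last first.
  by rewrite coprime_sym copk.
by rewrite dvd_small.
Qed.

Lemma G_D0 b : G D b = G 0 b.
Proof. by rewrite /G muln0 add0n dvdn_addr // dvdn_mull. Qed.

Lemma G0 b : (b <= D)%N -> G 0 b = (b == 0%N) || (b == D).
Proof.
move=> hb; rewrite /G muln0 add0n Gauss_dvdr ?dvd_small //.
by rewrite coprime_sym copK2.
Qed.

Lemma col b : (\sum_(a < D) G a b)%N = 1%N.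
Proof.
have Dpos : (0 < D)%N by rewrite /Dk; lia.
pose a0 := Ordinal (ltn_pmod (3 * K1 * K2 * b) Dpos).
have Ga0 : G a0 b.
  rewrite /G /= /dvdn -modnDml modnMmr modnDml -/(dvdn _ _).
  have -> : (K1 * (3 * K1 * K2 * b) + K2 * b = (4 * K2 * b) * D)%N.
    rewrite /K1 /Dk; nia.
  by rewrite dvdn_mull.
rewrite (bigD1 a0) //= big1 ?addn0 ?Ga0 //.
move=> a neq; case Ga: (G a b) => //; move/negP: neq; case; apply/eqP.
have uniq x y : (x < D)%N -> (y < D)%N -> (y <= x)%N -> G x b -> G y b -> x = y.
  move=> hx hy hyx gx gy.
  have : (D %| K1 * (x - y))%N.
    rewrite mulnBr; have := dvdn_sub gx gy.
    by have -> : (K1 * x + K2 * b - (K1 * y + K2 * b) = K1 * x - K1 * y)%N by lia.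
  rewrite Gauss_dvdr; last by rewrite coprime_sym copK1.
  move=> /dvdnP [q hq].
  case: q hq => [|q] hq; first by rewrite mul0n in hq; lia.
  have : (D <= x - y)%N by rewrite hq mulSn leq_addr.
  lia.
apply: val_inj => /=.
case: (leqP a a0) => h.
- by apply/esym/(uniq a0 a (ltn_ord a0) (ltn_ord a) h Ga0 Ga).
- by apply/(uniq a a0 (ltn_ord a) (ltn_ord a0) (ltnW h) Ga Ga0).
Qed.
Lemma sum_ends n (f : nat -> bool) : (0 < n)%N ->
  (forall i, (i <= n)%N -> f i = (i == 0%N) || (i == n)) ->
  (\sum_(i < n.+1) f i)%N = 2%N.
Proof.
case: n => [//|m] _ hf.
rewrite big_ord_recr big_ord_recl /= big1 ?hf ?eqxx ?orbT //=.
move=> i _; rewrite /bump leq0n add1n hf /=; last by have := ltn_ord i; lia.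
by have := ltn_ord i; case: (ltngtP i.+1 m.+1) => // ; lia.
Qed.

Definition Lw := (\sum_(a < D.+1) \sum_(b < D.+1) ((b <= a) && G a b))%N.
Definition Up := (\sum_(a < D.+1) \sum_(b < D.+1) ((a <= b) && G a b))%N.

Lemma Dpos : (0 < D)%N. Proof. rewrite /Dk; lia. Qed.

Lemma F_eq : (\sum_(a < D.+1) \sum_(b < D.+1) G a b)%N = (D + 3)%N.
Proof.
rewrite exchange_big /=.
rewrite (eq_bigr (fun b : 'I_D.+1 => 1 + G 0 b)%N); last first.
  by move=> b _; rewrite big_ord_recr /= col G_D0.
rewrite big_split /= sum1_card card_ord (@sum_ends D (fun b => G 0 b)) ?Dpos //.
  by lia.
by move=> i hi; rewrite G0.
Qed.

Lemma Diag_eq : (\sum_(a < D.+1) G a a)%N = 2%N.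
Proof. by rewrite (@sum_ends D (fun a => G a a)) ?Dpos // => i hi; rewrite G_diag. Qed.

Lemma LU : (Lw + Up = D + 3 + 2)%N.
Proof.
rewrite -F_eq -Diag_eq /Lw /Up -!big_split /=; apply: eq_bigr => a _.
rewrite -!big_split /=.
rewrite (bigD1 a) //= [X in _ = X + _](bigD1 a) //= leqnn /=.
have -> : (\sum_(i < D.+1 | i != a) ((i <= a) && G a i + (a <= i) && G a i))%N
   = (\sum_(i < D.+1 | i != a) G a i)%N.
  apply: eq_bigr => b nb.
  have : (nat_of_ord b != a) by [].
  by case: (G a b); rewrite ?andbF //=; case: ltngtP.
by rewrite [RHS]addnC addnA.
Qed.

Lemma UL : Up = Lw.
Proof.
rewrite /Up /Lw (reindex_inj rev_ord_inj) /=; apply: eq_bigr => a _.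
rewrite (reindex_inj rev_ord_inj) /=; apply: eq_bigr => b _.
have ha : (a <= D)%N by rewrite -ltnS ltn_ord.
have hb : (b <= D)%N by rewrite -ltnS ltn_ord.
have e : (D - a <= D - b)%N = (b <= a)%N by apply/idP/idP; lia.
by rewrite !subSS e G_rev.
Qed.

Lemma Lw_eq : Lw = ((D + 5) %/ 2)%N.
Proof. have := LU; rewrite UL; lia. Qed.
Open Scope ring_scope.
Local Notation kz := (k%:Z).
Lemma kX : Posz (k ^ 2)%N = kz ^+ 2. Proof. by rewrite expr2 -PoszM. Qed.
Lemma K1z : (K1%:Z) = 2 * kz + 1. Proof. by rewrite /K1 PoszD PoszM. Qed.
Lemma K2z : (K2%:Z) = 3 * kz ^+ 2 + 2 * kz.
Proof. have -> : K2 = (3 * k ^ 2 + 2 * k)%N by rewrite /K2 /Dk; lia.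
rewrite PoszD !PoszM; ring. Qed.
Lemma Dz : (D%:Z) = 3 * kz ^+ 2 + 3 * kz + 1.
Proof. rewrite /Dk !PoszD !PoszM; ring. Qed.

Lemma inPkE (p : int * int) : inPk k p <->
  exists x y : int, p = (x * (2 * kz + 1) + y * (kz + 1), x * kz + y * (2 * kz + 1)).
Proof.
rewrite /inPk /u_k /v_k /=.
have -> : Posz (2 * k + 1)%N = 2 * kz + 1 by rewrite PoszD PoszM.
by have -> : Posz (k + 1)%N = kz + 1 by rewrite PoszD.
Qed.

Lemma inPk_G (a b : nat) : inPk k (a%:Z, b%:Z) <-> G a b.
Proof.
rewrite inPkE; split.
- move=> [x [y [ha hb]]].
  have e : ((K1 * a + K2 * b)%N : int) = (x * (kz + 1) + y * (2 * kz + 1)) * D%:Z.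
    rewrite PoszD !PoszM K1z K2z Dz ha hb; ring.
  rewrite /G; have : (D%:Z %| (K1 * a + K2 * b)%N%:Z)%Z by apply/dvdzP; eexists; exact: e.
  by rewrite dvdzE !absz_nat.
- rewrite /G => /dvdnP [q hq].
  have hz : K1%:Z * a%:Z + K2%:Z * b%:Z = q%:Z * D%:Z by rewrite -!PoszM -PoszD hq.
  rewrite K1z K2z Dz in hz.
  set x : int := q%:Z - b%:Z.
  set t : int := (2 * kz + 1) * b%:Z - kz * a%:Z.
  set y : int := 4 * t - 3 * (2 * kz + 1) * (b%:Z - kz * x).
  set E : int := q%:Z * (3 * kz ^+ 2 + 3 * kz + 1) - (2 * kz + 1) * a%:Z - (3 * kz ^+ 2 + 2 * kz) * b%:Z.
  have E0 : E = 0 by rewrite /E -hz; ring.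
  exists x, y; congr (_, _).
  + have -> : x * (2 * kz + 1) + y * (kz + 1) = a%:Z + (2 * kz + 1) * E.
      by rewrite /y /t /x /E; ring.
    by rewrite E0 mulr0 addr0.
  + have -> : x * kz + y * (2 * kz + 1) = b%:Z + 4 * kz * E.
      by rewrite /y /t /x /E; ring.
    by rewrite E0 mulr0 addr0.
Qed.
End S.

Local Open Scope ring_scope.
Lemma inPk_add k p q : inPk k p -> inPk k q -> inPk k (p.1 + q.1, p.2 + q.2).
Proof.
move=> [x [y ->]] [x' [y' ->]]; exists (x + x'), (y + y') => /=; congr (_, _); ring.
Qed.
Lemma inPk_sub k p q : inPk k p -> inPk k q -> inPk k (p.1 - q.1, p.2 - q.2).
Proof.
move=> [x [y ->]] [x' [y' ->]]; exists (x - x'), (y - y') => /=; congr (_, _); ring.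
Qed.

Theorem lemma1 (k : nat) (c : int * int) :
  (1 <= k)%N -> inPk k c ->
  exists s : seq (int * int),
    [/\ uniq s,
        (forall p : int * int,
           p \in s <-> (inPk k p /\ exists a b : int, inT (Dk k) a b /\ p = shift c a b))
      & size s = ((Dk k + 5) %/ 2)%N].
Proof.
move=> hk hc.
pose P : pred ('I_(Dk k).+1 * 'I_(Dk k).+1) := fun ab => (ab.2 <= ab.1)%N && G k ab.1 ab.2.
pose f (ab : 'I_(Dk k).+1 * 'I_(Dk k).+1) := shift c (nat_of_ord ab.1)%:Z (nat_of_ord ab.2)%:Z.
exists [seq f ab | ab <- enum P]; split.
- rewrite map_inj_uniq ?enum_uniq //.
  move=> [a b] [a' b'] [/addrI ha /addrI hb].
  by congr (_, _); apply: val_inj; move: ha hb => [] ? [].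
- move=> p; split.
  + move=> /mapP [[a b] hab ->]; rewrite mem_enum /P /= in hab.
    case/andP: hab => hba hG.
    split.
      have hab : inPk k ((nat_of_ord a)%:Z, (nat_of_ord b)%:Z) by apply/inPk_G.
      exact: (@inPk_add k _ _ hc hab).
    exists a, b; split => //; rewrite /inT !lez_nat hba /=.
    by split => //; split => //; rewrite -ltnS ltn_ord.
  + move=> [hp [a [b [[h0 [hba haD]] ep]]]]; subst p.
    case: b h0 hba hp => [nb|//] _ hba hp.
    case: a hba haD hp => [na|//] hba haD hp.
    rewrite !lez_nat in hba haD.
    have Ga : G k na nb.
      apply/inPk_G; have := @inPk_sub k _ _ hp hc; rewrite /shift /=.
      by rewrite ![c.1 + _]addrC ![c.2 + _]addrC !addrK.
    apply/mapP.
    have hna : (na < (Dk k).+1)%N by [].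
    have hnb : (nb < (Dk k).+1)%N by apply: leq_ltn_trans hba _.
    exists (Ordinal hna, Ordinal hnb) => //.
    by rewrite mem_enum unfold_in /P /= hba Ga.
- rewrite size_map -cardE -Lw_eq -sum1_card big_mkcond /Lw pair_big /=.
  by apply: eq_bigr => [[a b]] _; rewrite /= unfold_in /P /=; case: (_ && _).
Qed.
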